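(* Let $n$ be an odd squarefree positive integer. If $n\equiv 5$ or $7\pmod 8$, then $c_1(n)=0$. If $n\equiv 3\pmod 4$, then $c_2(n)=0$.
   Context: Define the formal power series $g(T)=T\prod_{k=1}^{\infty}(1-T^{8k})(1-T^{16k})\in\mathbb{Z}[[T]]$ and, for $j=1,2$, $\theta_j(T)=1+2\sum_{k=1}^{\infty}T^{2jk^2}$. For $j=1,2$ and an integer $n>0$, $c_j(n)$ denotes the coefficient of $T^n$ in the formal power series $g(T)\theta_j(T)$. *)

(* Defs.v *)
(* Formal power series over Z are handled through their
   truncations: the coefficient of T^n in an infinite product/sum of the
   given shape only depends on the factors/terms of degree <= n, so we
   compute it in the polynomial truncation with index range k <= N, N = n. *)
From mathcomp Require Import all_boot all_order all_algebra.
Set Implicit Arguments. Unset Strict Implicit. Unset Printing Implicit Defensive.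
Import GRing.Theory.
Local Open Scope ring_scope.

Definition g_trunc (N : nat) : {poly int} :=
  'X * \prod_(1 <= k < N.+1) ((1 - 'X^(8 * k)) * (1 - 'X^(16 * k))).

Definition theta_trunc (j N : nat) : {poly int} :=
  1 + 2%:R * \sum_(1 <= k < N.+1) 'X^(2 * j * k ^ 2).

(* c_j(n) = coefficient of T^n in g(T) theta_j(T); the truncation at N = n
   is exact since all omitted factors are 1 + O(T^{n+1}) and omitted terms
   are O(T^{n+1}). *)
Definition c (j n : nat) : int := (g_trunc n * theta_trunc j n)`_n.

Definition squarefree (n : nat) : bool :=
  [forall p : 'I_n.+1, prime p ==> ~~ (p * p %| n)%N].

(* Main.v *)
Require Import Defs.
From mathcomp Require Import all_boot all_order all_algebra.
From Stdlib Require Import Classical.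
Set Implicit Arguments. Unset Strict Implicit. Unset Printing Implicit Defensive.
Import GRing.Theory.
Local Open Scope ring_scope.

Lemma coefM0 (p q : {poly int}) (Pp Pq : nat -> Prop) n :
  (forall i, ~ Pp i -> p`_i = 0) -> (forall i, ~ Pq i -> q`_i = 0) ->
  (forall j, (j <= n)%N -> Pp j -> Pq (n - j)%N -> False) -> (p * q)`_n = 0.
Proof.
move=> hp hq hn; rewrite coefM big1 // => [[j hj]] _ /=.
have hjn : (j <= n)%N by rewrite -ltnS.
case: (classic (Pp j)) => [Hj|Hj]; last by rewrite hp ?mul0r.
case: (classic (Pq (n - j)%N)) => [Hq|Hq]; last by rewrite (hq _ Hq) mulr0.
by case: (hn j hjn Hj Hq).
Qed.

Definition s8 (p : {poly int}) := forall i, ~ (8 %| i)%N -> p`_i = 0.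

Lemma s8M p q : s8 p -> s8 q -> s8 (p * q).
Proof.
move=> hp hq i hi; apply: (coefM0 (Pp := fun i => (8 %| i)%N) (Pq := fun i => (8 %| i)%N)) => // j hj h1 h2.
by apply: hi; rewrite -(subnKC hj) dvdn_add.
Qed.

Lemma s8_1 : s8 1.
Proof. by move=> [|i] hi; rewrite coef1 //; case: hi. Qed.

Lemma s8_term k : s8 (1 - 'X^(8 * k)).
Proof.
move=> i hi; rewrite coefB coef1 coefXn.
case: eqP => [e|_]; first by case: hi; rewrite e.
case: eqP => [e|_]; first by case: hi; rewrite e dvdn_mulr.
by rewrite subr0.
Qed.

Lemma s8_prod N : s8 (\prod_(1 <= k < N.+1) ((1 - 'X^(8 * k)) * (1 - 'X^(16 * k)))).
Proof.
apply: (big_ind s8); [exact: s8_1| exact: s8M|] => k _.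
apply: s8M; first exact: s8_term.
have -> : (16 * k)%N = (8 * (2 * k))%N by rewrite mulnA.
exact: s8_term.
Qed.

Lemma g_coef N i : ~ (i %% 8 == 1)%N -> (g_trunc N)`_i = 0.
Proof.
move=> hi; rewrite /g_trunc coefXM; case: i hi => [|i] hi //=.
apply: s8_prod => h; apply: hi.
by rewrite -addn1 -modnDm (eqP h).
Qed.

Lemma theta_coef j N i : ~ (exists k, i = (2 * j * k ^ 2)%N) -> (theta_trunc j N)`_i = 0.
Proof.
move=> hi; rewrite /theta_trunc coefD coef1 mulr_natl coefMn coef_sum.
case: eqP => [e|_]; first by case: hi; exists 0%N; rewrite e muln0.
rewrite big1 ?mul0rn ?add0r // => k _; rewrite coefXn; case: eqP => // e.
by case: hi; exists k.
Qed.

Lemma sq_mod (jj k : nat) : ((2 * jj * k ^ 2) %% 8 = (2 * ((jj * (k %% 4) ^ 2) %% 4)))%N.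
Proof.
rewrite muln_modr -mulnA (_ : 8 = 2 * 4)%N // -!muln_modr; congr (2 * _)%N.
by rewrite -modnMmr -modnXm modnMmr.
Qed.

Theorem mainTheorem10 (n : nat) :
  (0 < n)%N -> odd n -> squarefree n ->
  ((n %% 8 == 5)%N || (n %% 8 == 7)%N -> c 1 n = 0%R) /\
  ((n %% 4 == 3)%N -> c 2 n = 0%R).
Proof.
move=> _ _ _; split=> hn; rewrite /c;
  apply: (coefM0 (Pp := fun i => (i %% 8 == 1)%N) (Pq := fun i => exists k, i = (2 * _ * k ^ 2)%N));
  [exact: g_coef | exact: theta_coef | | exact: g_coef | exact: theta_coef |];
  move=> i hi /eqP h1 [k hk]; move: hn;
  rewrite -(subnKC hi) hk.
  rewrite -modnDm h1 sq_mod.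
  have : (k %% 4 < 4)%N by rewrite ltn_mod.
  by case: (k %% 4)%N => [|[|[|[|]]]].
by rewrite -modnDm -(modn_dvdm i (_ : 4 %| 8)%N) // h1 (_ : 2 * 2 = 4)%N // modnMr.
Qed.
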